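(* Let $G$ be a graph with exactly four vertices and $\operatorname{sdim}G=2$. Then $R_G\le\frac{\sqrt2}{2}$.
   Context: A unit-distance embedding of a graph $G$ in $\mathbb{R}^n$ is an injective map $f$ from the vertex set of $G$ to $\mathbb{R}^n$ such that $|f(u)-f(v)|=1$ for every edge $uv$ and no point $f(w)$ lies on the segment $[f(u),f(v)]$ for an edge $uv$ with $w\notin\{u,v\}$. $G$ admits a spherical embedding of dimension $k$ and radius $r$ if $G$ has a unit-distance embedding in $\mathbb{R}^k$ all of whose vertices lie on a sphere $\{x\in\mathbb{R}^k:|x-c|=r\}$. $\operatorname{sdim}G$ is the least $k$ such that $G$ admits a spherical embedding of dimension $k$ and some radius $r<1$. $R_G$ is the infimum of all $r<1$ such that $G$ admits a spherical embedding of dimension $\operatorname{sdim}G$ and radius $r$. *)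

(* Defs.v *)
From HB Require Import structures.
From mathcomp Require Import all_boot all_order all_algebra.
From mathcomp Require Import boolp classical_sets reals.
Set Implicit Arguments. Unset Strict Implicit. Unset Printing Implicit Defensive.
Import Order.TTheory GRing.Theory Num.Theory.
Local Open Scope ring_scope.
Local Open Scope classical_set_scope.

Definition enorm (R : realType) (k : nat) (x : 'rV[R]_k) : R :=
  Num.sqrt (\sum_(i < k) (x 0 i) ^+ 2).

(* A simple graph on a finite vertex type T is a symmetric irreflexive
   relation e : rel T; uv is an edge iff e u v. *)

Definition unit_dist_emb (R : realType) (T : finType) (e : rel T) (k : nat)
    (f : T -> 'rV[R]_k) : Prop :=
  injective f /\
  (forall u v, e u v -> enorm (f u - f v) = 1) /\
  (forall u v w, e u v -> w != u -> w != v ->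
     ~ (exists t : R, 0 <= t <= 1 /\ f w = (1 - t) *: f u + t *: f v)).

Definition spherical_emb (R : realType) (T : finType) (e : rel T) (k : nat)
    (r : R) : Prop :=
  0 < r /\
  exists (f : T -> 'rV[R]_k) (c : 'rV[R]_k),
    unit_dist_emb e f /\ forall w, enorm (f w - c) = r.

Definition sdim_is (R : realType) (T : finType) (e : rel T) (k : nat) : Prop :=
  (exists r : R, r < 1 /\ spherical_emb e k r) /\
  (forall j, (j < k)%N -> ~ (exists r : R, r < 1 /\ spherical_emb e j r)).

(* R_G, given that sdim G = k. *)
Definition RG (R : realType) (T : finType) (e : rel T) (k : nat) : R :=
  inf [set r : R | r < 1 /\ spherical_emb e k r].

(* Main.v *)
Require Import Defs.
From HB Require Import structures.
From mathcomp Require Import all_boot all_order all_algebra.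
From mathcomp Require Import boolp classical_sets reals.
From mathcomp Require Import ring lra.
Import Order.TTheory GRing.Theory Num.Theory.
Local Open Scope ring_scope.

Section Geo.
Context {R : realType}.
Lemma enorm2 (x : 'rV[R]_2) : enorm x = Num.sqrt (x 0 0 ^+ 2 + x 0 1 ^+ 2).
Proof.
rewrite /enorm !big_ord_recl big_ord0 addr0.
have -> : (lift ord0 ord0 : 'I_2) = 1 by apply: val_inj.
done.
Qed.

Lemma enorm_sq (x : 'rV[R]_2) r : enorm x = r -> x 0 0 ^+ 2 + x 0 1 ^+ 2 = r ^+ 2.
Proof.
rewrite enorm2 => <-. rewrite sqr_sqrtr //. by rewrite addr_ge0 // sqr_ge0.
Qed.

Lemma enorm_eq (x : 'rV[R]_2) r : 0 <= r -> x 0 0 ^+ 2 + x 0 1 ^+ 2 = r ^+ 2 -> enorm x = r.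
Proof. move=> r0 h; rewrite enorm2 h sqrtr_sqr ger0_norm //. Qed.

Lemma rv2_eq (x y : 'rV[R]_2) : x 0 0 = y 0 0 -> x 0 1 = y 0 1 -> x = y.
Proof.
move=> h0 h1; apply/rowP => i.
have [->|->] : i = 0 \/ i = 1.
  case: i => [[|[|//]]] Hi; [left|right]; exact: val_inj.
all: by [].
Qed.

Lemma subc (x y : 'rV[R]_2) i : (x - y) 0 i = x 0 i - y 0 i.
Proof. by rewrite !mxE. Qed.

Lemma inj_dd (a1 a2 b1 b2 p q : R) : p ^+ 2 + q ^+ 2 != 0 ->
  a1 * p + a2 * q = b1 * p + b2 * q ->
  a2 * p - a1 * q = b2 * p - b1 * q -> a1 = b1 /\ a2 = b2.
Proof.
move=> nz h1 h2.
have E : ((a1 - b1) ^+ 2 + (a2 - b2) ^+ 2) * (p ^+ 2 + q ^+ 2) = 0.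
  have -> : ((a1 - b1) ^+ 2 + (a2 - b2) ^+ 2) * (p ^+ 2 + q ^+ 2) =
    ((a1 * p + a2 * q) - (b1 * p + b2 * q)) ^+ 2 + ((a2 * p - a1 * q) - (b2 * p - b1 * q)) ^+ 2 by ring.
  by rewrite h1 h2 !subrr expr0n /= addr0.
move/eqP: E; rewrite mulf_eq0 (negbTE nz) orbF => /eqP E.
have s1 : (a1 - b1) ^+ 2 = 0 by move: E; have := sqr_ge0 (a1 - b1); have := sqr_ge0 (a2 - b2); lra.
have s2 : (a2 - b2) ^+ 2 = 0 by move: E; have := sqr_ge0 (a1 - b1); have := sqr_ge0 (a2 - b2); lra.
move/eqP: s1; rewrite sqrf_eq0 subr_eq0 => /eqP ->.
move/eqP: s2; rewrite sqrf_eq0 subr_eq0 => /eqP ->. by [].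
Qed.

Lemma three_pts (a1 a2 b1 b2 w1 w2 p q k m : R) : p ^+ 2 + q ^+ 2 != 0 ->
  a1 * p + a2 * q = k -> b1 * p + b2 * q = k -> w1 * p + w2 * q = k ->
  a1 ^+ 2 + a2 ^+ 2 = m -> b1 ^+ 2 + b2 ^+ 2 = m -> w1 ^+ 2 + w2 ^+ 2 = m ->
  (a1 = b1 /\ a2 = b2) \/ (a1 = w1 /\ a2 = w2) \/ (b1 = w1 /\ b2 = w2).
Proof.
move=> nz ha hb hw ma mb mw.
have L : forall x1 x2, x1 * p + x2 * q = k -> x1 ^+ 2 + x2 ^+ 2 = m ->
   (x2 * p - x1 * q) ^+ 2 = m * (p ^+ 2 + q ^+ 2) - k ^+ 2.
  move=> x1 x2 <- <-; ring.
have Sa := L _ _ ha ma; have Sb := L _ _ hb mb; have Sw := L _ _ hw mw.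
have sq : forall x y : R, x ^+ 2 = y ^+ 2 -> x = y \/ x = - y.
  move=> x y /eqP; rewrite eqf_sqr => /orP[/eqP->|/eqP->]; by [left|right].
have [Hab|Hab] := sq _ _ (etrans Sa (esym Sb)).
  left; apply: inj_dd nz _ Hab; by rewrite ha hb.
have [Haw|Haw] := sq _ _ (etrans Sa (esym Sw)).
  right; left; apply: inj_dd nz _ Haw; by rewrite ha hw.
right; right; apply: inj_dd nz _ _; first by rewrite hb hw.
by apply: oppr_inj; rewrite -Hab -Haw.
Qed.

Lemma seg_pts (u1 u2 v1 v2 w1 w2 t m : R) :
  w1 = (1 - t) * u1 + t * v1 -> w2 = (1 - t) * u2 + t * v2 ->
  u1 ^+ 2 + u2 ^+ 2 = m -> v1 ^+ 2 + v2 ^+ 2 = m -> w1 ^+ 2 + w2 ^+ 2 = m ->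
  (w1 = u1 /\ w2 = u2) \/ (w1 = v1 /\ w2 = v2).
Proof.
move=> h1 h2 mu mv mw.
have E : t * (1 - t) * ((u1 - v1) ^+ 2 + (u2 - v2) ^+ 2) = 0.
  have -> : t * (1 - t) * ((u1 - v1) ^+ 2 + (u2 - v2) ^+ 2) =
     (1 - t) * (u1 ^+ 2 + u2 ^+ 2) + t * (v1 ^+ 2 + v2 ^+ 2) - (w1 ^+ 2 + w2 ^+ 2)
     by rewrite h1 h2; ring.
  rewrite mu mv mw; ring.
move/eqP: E; rewrite !mulf_eq0 => /orP[/orP[/eqP t0|/eqP t1]|/eqP S].
- left; rewrite h1 h2 t0; split; ring.
- right; have t1e : t = 1 by lra.
  rewrite h1 h2 t1e; split; ring.


- have s1 : (u1 - v1) ^+ 2 = 0 by move: S; have := sqr_ge0 (u1 - v1); have := sqr_ge0 (u2 - v2); lra.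
  have s2 : (u2 - v2) ^+ 2 = 0 by move: S; have := sqr_ge0 (u1 - v1); have := sqr_ge0 (u2 - v2); lra.
  move/eqP: s1; rewrite sqrf_eq0 subr_eq0 => /eqP e1.
  move/eqP: s2; rewrite sqrf_eq0 subr_eq0 => /eqP e2.
  left; rewrite h1 h2 -e1 -e2; split; ring.
Qed.
Definition mk (a b : R) : 'rV[R]_2 := \row_(i < 2) if i == 0 then a else b.
Lemma mk0 a b : mk a b 0 0 = a. Proof. by rewrite mxE eqxx. Qed.
Lemma mk1 a b : mk a b 0 1 = b. Proof. by rewrite mxE. Qed.
Lemma dotk (x0 x1 v0 v1 c0 c1 r : R) :
  (x0 - c0) ^+ 2 + (x1 - c1) ^+ 2 = r ^+ 2 -> (v0 - c0) ^+ 2 + (v1 - c1) ^+ 2 = r ^+ 2 ->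
  (x0 - v0) ^+ 2 + (x1 - v1) ^+ 2 = 1 ->
  (x0 - c0) * (v0 - c0) + (x1 - c1) * (v1 - c1) = (2 * r ^+ 2 - 1) / 2.
Proof.
move=> h1 h2 h3.
have E : (x0 - v0) ^+ 2 + (x1 - v1) ^+ 2 = ((x0 - c0) ^+ 2 + (x1 - c1) ^+ 2) + ((v0 - c0) ^+ 2 + (v1 - c1) ^+ 2) - 2 * ((x0 - c0) * (v0 - c0) + (x1 - c1) * (v1 - c1)) by ring.
rewrite h1 h2 h3 in E. move: E. set D := (_ + _ * _). move=> E. lra.
Qed.
End Geo.

Section Gr.
Variable R : realType.
Variable T : finType.
Variable e : rel T.
Hypothesis esym : symmetric e.
Hypothesis eirr : irreflexive e.

Lemma circle_emb (f : T -> 'rV[R]_2) c r : injective f ->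
  (forall u v, e u v -> enorm (f u - f v) = 1) ->
  (forall w, enorm (f w - c) = r) -> unit_dist_emb e f.
Proof.
move=> fi fe fc; split=> //; split=> // u v w euv wu wv [t [t01 fw]].
have cw0 : f w 0 0 - c 0 0 = (1 - t) * (f u 0 0 - c 0 0) + t * (f v 0 0 - c 0 0).
  by rewrite fw !mxE; ring.
have cw1 : f w 0 1 - c 0 1 = (1 - t) * (f u 0 1 - c 0 1) + t * (f v 0 1 - c 0 1).
  by rewrite fw !mxE; ring.
have M : forall x, (f x 0 0 - c 0 0) ^+ 2 + (f x 0 1 - c 0 1) ^+ 2 = r ^+ 2.
  by move=> x; have := enorm_sq _ _ (fc x); rewrite !subc.
case: (seg_pts _ _ _ _ _ _ _ _ cw0 cw1 (M u) (M v) (M w)) => [[h0 h1]|[h0 h1]].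
- by move/negP: wu; apply; apply/eqP; apply: fi; apply: rv2_eq; lra.
- by move/negP: wv; apply; apply/eqP; apply: fi; apply: rv2_eq; lra.
Qed.

Lemma deg3 (f : T -> 'rV[R]_2) c r : 0 < r -> unit_dist_emb e f ->
  (forall w, enorm (f w - c) = r) ->
  forall v x y z, e v x -> e v y -> e v z -> x != y -> x != z -> y != z -> False.
Proof.
move=> r0 [fi [fe _]] fc v x y z evx evy evz nxy nxz nyz.
have M : forall x, (f x 0 0 - c 0 0) ^+ 2 + (f x 0 1 - c 0 1) ^+ 2 = r ^+ 2.
  by move=> w; have := enorm_sq _ _ (fc w); rewrite !subc.
have K : forall w, e v w -> (f w 0 0 - c 0 0) * (f v 0 0 - c 0 0) +
    (f w 0 1 - c 0 1) * (f v 0 1 - c 0 1) = (2 * r ^+ 2 - 1) / 2.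
  move=> w evw; apply: dotk; [exact: M | exact: M |].
  have ewv : e w v by rewrite esym.
  by have := enorm_sq _ _ (fe _ _ ewv); rewrite !subc expr1n.
have nz : (f v 0 0 - c 0 0) ^+ 2 + (f v 0 1 - c 0 1) ^+ 2 != 0.
  by rewrite M sqrf_eq0 gt_eqF.
case: (three_pts _ _ _ _ _ _ _ _ _ _ nz (K x evx) (K y evy) (K z evz) (M x) (M y) (M z))
  => [[h0 h1]|[[h0 h1]|[h0 h1]]].
- by move/negP: nxy; apply; apply/eqP; apply: fi; apply: rv2_eq; lra.
- by move/negP: nxz; apply; apply/eqP; apply: fi; apply: rv2_eq; lra.
- by move/negP: nyz; apply; apply/eqP; apply: fi; apply: rv2_eq; lra.
Qed.

End Gr.

Section Cases.
Variable R : realType.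
Variable T : finType.
Variable e : rel T.
Hypothesis esym : symmetric e.
Hypothesis eirr : irreflexive e.

Definition good (r0 : R) := r0 <= Num.sqrt 2 / 2 /\ r0 < 1 /\ spherical_emb e 2 r0.

Lemma ptneq (a b c d : R) : mk a b = mk c d -> a = c /\ b = d.
Proof.
move=> E; have E0 := congr1 (fun M : 'rV[R]_2 => M 0 0) E.
have E1 := congr1 (fun M : 'rV[R]_2 => M 0 1) E.
by rewrite /= !mk0 !mk1 in E0 E1.
Qed.

Lemma caseA a b c d : a != b -> a != c -> a != d -> b != c -> b != d -> c != d ->
  (forall w, w = a \/ w = b \/ w = c \/ w = d) -> ~~ e a b -> ~~ e c d ->
  exists r0, good r0.
Proof.
move=> nab nac nad nbc nbd ncd cov eab ecd.
have nba : b != a by rewrite eq_sym.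
have nca : c != a by rewrite eq_sym.
have nda : d != a by rewrite eq_sym.
have ncb : c != b by rewrite eq_sym.
have ndb : d != b by rewrite eq_sym.
have ndc : d != c by rewrite eq_sym.
have eba : ~~ e b a by rewrite esym.
have edc : ~~ e d c by rewrite esym.
pose h : R := 2^-1.
pose f w := if w == a then mk h h else if w == b then mk (-h) (-h)
  else if w == c then mk (-h) h else mk h (-h).
have s2 : Num.sqrt 2 ^+ 2 = 2 :> R by rewrite sqr_sqrtr // ler0n.
have s0 : 0 <= Num.sqrt 2 :> R := sqrtr_ge0 _.
exists (Num.sqrt 2 / 2); split; first by [].
split; first nra.
split; first nra.
exists f, 0; split; last first.
  move=> w; apply: enorm_eq; first nra.
  rewrite subr0; case: (cov w) => [->|[->|[->|->]]];
  rewrite /f ?eqxx ?(negbTE nab, negbTE nac, negbTE nad, negbTE nbc, negbTE nbd, negbTE ncd,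
     negbTE nba, negbTE nca, negbTE nda, negbTE ncb, negbTE ndb, negbTE ndc) /= ?mk0 ?mk1 /h; nra.
have fi : injective f.
  move=> x y; case: (cov x) => [->|[->|[->|->]]]; case: (cov y) => [->|[->|[->|->]]];
  rewrite /f ?eqxx ?(negbTE nab, negbTE nac, negbTE nad, negbTE nbc, negbTE nbd, negbTE ncd,
     negbTE nba, negbTE nca, negbTE nda, negbTE ncb, negbTE ndb, negbTE ndc) /=;
  (try done); move/ptneq; rewrite /h => -[? ?]; exfalso; lra.
apply: (@circle_emb R T e f 0 (Num.sqrt 2 / 2)).
- exact: fi.
- move=> u v; case: (cov u) => [->|[->|[->|->]]]; case: (cov v) => [->|[->|[->|->]]];
  rewrite ?eirr ?(negbTE eab) ?(negbTE eba) ?(negbTE ecd) ?(negbTE edc) // => _;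
  apply: enorm_eq => //;
  rewrite /f ?eqxx ?(negbTE nab, negbTE nac, negbTE nad, negbTE nbc, negbTE nbd, negbTE ncd,
     negbTE nba, negbTE nca, negbTE nda, negbTE ncb, negbTE ndb, negbTE ndc) /= !subc ?mk0 ?mk1 /h; nra.
- move=> w; apply: enorm_eq; first nra.
  rewrite subr0; case: (cov w) => [->|[->|[->|->]]];
  rewrite /f ?eqxx ?(negbTE nab, negbTE nac, negbTE nad, negbTE nbc, negbTE nbd, negbTE ncd,
     negbTE nba, negbTE nca, negbTE nda, negbTE ncb, negbTE ndb, negbTE ndc) /= ?mk0 ?mk1 /h; nra.
Qed.

Lemma caseB a b c d : a != b -> a != c -> a != d -> b != c -> b != d -> c != d ->
  (forall w, w = a \/ w = b \/ w = c \/ w = d) -> ~~ e d a -> ~~ e d b -> ~~ e d c ->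
  exists r0, good r0.
Proof.
move=> nab nac nad nbc nbd ncd cov eda edb edc.
have nba : b != a by rewrite eq_sym.
have nca : c != a by rewrite eq_sym.
have nda : d != a by rewrite eq_sym.
have ncb : c != b by rewrite eq_sym.
have ndb : d != b by rewrite eq_sym.
have ndc : d != c by rewrite eq_sym.
have ead : ~~ e a d by rewrite esym.
have ebd : ~~ e b d by rewrite esym.
have ecd : ~~ e c d by rewrite esym.
pose h : R := 2^-1.
pose s : R := Num.sqrt (3^-1).
have s3 : s ^+ 2 = 3^-1 by rewrite /s sqr_sqrtr // invr_ge0 ler0n.
have s0' : 0 <= s by exact: sqrtr_ge0.
have sp : 0 < s by nra.
pose f w := if w == a then mk 0 s else if w == b then mk h (- s / 2)
  else if w == c then mk (- h) (- s / 2) else mk 0 (- s).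
have s2 : Num.sqrt 2 ^+ 2 = 2 :> R by rewrite sqr_sqrtr // ler0n.
have s0 : 0 <= Num.sqrt 2 :> R := sqrtr_ge0 _.
exists s; split.
  rewrite leNgt; apply/negP => H.
  have : (Num.sqrt 2 / 2) ^+ 2 < s ^+ 2.
    by rewrite ltr_pXn2r // ?nnegrE // divr_ge0.
  rewrite expr_div_n s2 s3; lra.
split; first nra.
split; first done.
have fi : injective f.
  move=> x y; case: (cov x) => [->|[->|[->|->]]]; case: (cov y) => [->|[->|[->|->]]];
  rewrite /f ?eqxx ?(negbTE nab, negbTE nac, negbTE nad, negbTE nbc, negbTE nbd, negbTE ncd,
     negbTE nba, negbTE nca, negbTE nda, negbTE ncb, negbTE ndb, negbTE ndc) /=;
  (try done); move/ptneq; rewrite /h => -[? ?]; exfalso; lra.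
exists f, 0; split; last first.
  move=> w; apply: enorm_eq; first nra.
  rewrite subr0; case: (cov w) => [->|[->|[->|->]]];
  rewrite /f ?eqxx ?(negbTE nab, negbTE nac, negbTE nad, negbTE nbc, negbTE nbd, negbTE ncd,
     negbTE nba, negbTE nca, negbTE nda, negbTE ncb, negbTE ndb, negbTE ndc) /= ?mk0 ?mk1 /h; nra.
apply: (@circle_emb R T e f 0 s).
- exact: fi.
- move=> u v; case: (cov u) => [->|[->|[->|->]]]; case: (cov v) => [->|[->|[->|->]]];
  rewrite ?eirr ?(negbTE eda) ?(negbTE edb) ?(negbTE edc) ?(negbTE ead) ?(negbTE ebd) ?(negbTE ecd) // => _;
  apply: enorm_eq => //;
  rewrite /f ?eqxx ?(negbTE nab, negbTE nac, negbTE nad, negbTE nbc, negbTE nbd, negbTE ncd,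
     negbTE nba, negbTE nca, negbTE nda, negbTE ncb, negbTE ndb, negbTE ndc) /= !subc ?mk0 ?mk1 /h; nra.
- move=> w; apply: enorm_eq; first nra.
  rewrite subr0; case: (cov w) => [->|[->|[->|->]]];
  rewrite /f ?eqxx ?(negbTE nab, negbTE nac, negbTE nad, negbTE nbc, negbTE nbd, negbTE ncd,
     negbTE nba, negbTE nca, negbTE nda, negbTE ncb, negbTE ndb, negbTE ndc) /= ?mk0 ?mk1 /h; nra.
Qed.

End Cases.

Theorem mainTheorem14 (R : realType) (T : finType) (e : rel T) :
  symmetric e -> irreflexive e -> #|T| = 4%N ->
  sdim_is R e 2 ->
  RG R e 2 <= Num.sqrt 2 / 2.
Proof.
move=> esym eirr card [[r [r1 [r0 [f [c [emb circ]]]]]] _].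
have deg := @deg3 R T e esym f c r r0 emb circ.
suff [r' [h1 [h2 h3]]] : exists r0, @good R T e r0.
  apply: le_trans h1; apply: ge_inf; last by split.
  by exists 0 => y [_ [y0 _]]; apply: ltW.
have: size (enum T) = 4%N by rewrite -cardE.
have cov0 : forall w, w \in enum T by move=> w; rewrite mem_enum.
have U := enum_uniq T.
case E: (enum T) => [|x0 [|x1 [|x2 [|x3 [|? ?]]]]] // _.
rewrite E in cov0 U.
have cov : forall w, w = x0 \/ w = x1 \/ w = x2 \/ w = x3.
  by move=> w; move: (cov0 w); rewrite !inE => /or4P [] /eqP ->; tauto.
move: U; rewrite /= !inE !negb_or => /and4P [/and3P [n01 n02 n03] /andP [n12 n13] n23 _].
have n10 : x1 != x0 by rewrite eq_sym.
have n20 : x2 != x0 by rewrite eq_sym.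
have n30 : x3 != x0 by rewrite eq_sym.
have n21 : x2 != x1 by rewrite eq_sym.
have n31 : x3 != x1 by rewrite eq_sym.
have n32 : x3 != x2 by rewrite eq_sym.
case h01 : (e x0 x1); case h02 : (e x0 x2); case h03 : (e x0 x3);
case h12 : (e x1 x2); case h13 : (e x1 x3); case h23 : (e x2 x3);
  first [
    solve [apply: (@caseA R T e esym eirr x0 x1 x2 x3); solve [ assumption
  | (move=> w; case: (cov w) => [->|[->|[->|->]]]; tauto)
  | (by rewrite ?h01 ?h02 ?h03 ?h12 ?h13 ?h23)
  | (by rewrite esym ?h01 ?h02 ?h03 ?h12 ?h13 ?h23) ]]
  | solve [apply: (@caseA R T e esym eirr x0 x2 x1 x3); solve [ assumption
  | (move=> w; case: (cov w) => [->|[->|[->|->]]]; tauto)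
  | (by rewrite ?h01 ?h02 ?h03 ?h12 ?h13 ?h23)
  | (by rewrite esym ?h01 ?h02 ?h03 ?h12 ?h13 ?h23) ]]
  | solve [apply: (@caseA R T e esym eirr x0 x3 x1 x2); solve [ assumption
  | (move=> w; case: (cov w) => [->|[->|[->|->]]]; tauto)
  | (by rewrite ?h01 ?h02 ?h03 ?h12 ?h13 ?h23)
  | (by rewrite esym ?h01 ?h02 ?h03 ?h12 ?h13 ?h23) ]]
  | solve [apply: (@caseB R T e esym eirr x0 x1 x2 x3); solve [ assumption
  | (move=> w; case: (cov w) => [->|[->|[->|->]]]; tauto)
  | (by rewrite ?h01 ?h02 ?h03 ?h12 ?h13 ?h23)
  | (by rewrite esym ?h01 ?h02 ?h03 ?h12 ?h13 ?h23) ]]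
  | solve [apply: (@caseB R T e esym eirr x0 x1 x3 x2); solve [ assumption
  | (move=> w; case: (cov w) => [->|[->|[->|->]]]; tauto)
  | (by rewrite ?h01 ?h02 ?h03 ?h12 ?h13 ?h23)
  | (by rewrite esym ?h01 ?h02 ?h03 ?h12 ?h13 ?h23) ]]
  | solve [apply: (@caseB R T e esym eirr x0 x2 x3 x1); solve [ assumption
  | (move=> w; case: (cov w) => [->|[->|[->|->]]]; tauto)
  | (by rewrite ?h01 ?h02 ?h03 ?h12 ?h13 ?h23)
  | (by rewrite esym ?h01 ?h02 ?h03 ?h12 ?h13 ?h23) ]]
  | solve [apply: (@caseB R T e esym eirr x1 x2 x3 x0); solve [ assumption
  | (move=> w; case: (cov w) => [->|[->|[->|->]]]; tauto)
  | (by rewrite ?h01 ?h02 ?h03 ?h12 ?h13 ?h23)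
  | (by rewrite esym ?h01 ?h02 ?h03 ?h12 ?h13 ?h23) ]]
  | solve [exfalso; apply: (deg x0 x1 x2 x3); solve [ assumption
  | (move=> w; case: (cov w) => [->|[->|[->|->]]]; tauto)
  | (by rewrite ?h01 ?h02 ?h03 ?h12 ?h13 ?h23)
  | (by rewrite esym ?h01 ?h02 ?h03 ?h12 ?h13 ?h23) ]]
  | solve [exfalso; apply: (deg x1 x0 x2 x3); solve [ assumption
  | (move=> w; case: (cov w) => [->|[->|[->|->]]]; tauto)
  | (by rewrite ?h01 ?h02 ?h03 ?h12 ?h13 ?h23)
  | (by rewrite esym ?h01 ?h02 ?h03 ?h12 ?h13 ?h23) ]]
  | solve [exfalso; apply: (deg x2 x0 x1 x3); solve [ assumption
  | (move=> w; case: (cov w) => [->|[->|[->|->]]]; tauto)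
  | (by rewrite ?h01 ?h02 ?h03 ?h12 ?h13 ?h23)
  | (by rewrite esym ?h01 ?h02 ?h03 ?h12 ?h13 ?h23) ]]
  | solve [exfalso; apply: (deg x3 x0 x1 x2); solve [ assumption
  | (move=> w; case: (cov w) => [->|[->|[->|->]]]; tauto)
  | (by rewrite ?h01 ?h02 ?h03 ?h12 ?h13 ?h23)
  | (by rewrite esym ?h01 ?h02 ?h03 ?h12 ?h13 ?h23) ]] ].
Qed.
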